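(* Let $\mathbf{x}\in(\Sigma^* )^\circ$ be arbitrary and let $\mathbf{s}\in\mathbb{R}^U$. Define the block-diagonal symmetric matrix \[ \mathbf{S}(\mathbf{x},\mathbf{s}) := \Lambda(\mathbf{x})^{-1}\,\Lambda\!\left(H(\mathbf{x})^{-1}\mathbf{s}\right)\Lambda(\mathbf{x})^{-1}. \] Then $\Lambda^*(\mathbf{S}(\mathbf{x},\mathbf{s}))=\mathbf{s}$. Moreover, for $\mathbf{s}\in\Sigma$, $\mathbf{x}$ is a dual certificate of $\mathbf{s}$ (i.e. $H(\mathbf{x})^{-1}\mathbf{s}\in\Sigma^*$) if and only if $\mathbf{S}(\mathbf{x},\mathbf{s})\succeq \mathbf{0}$.
   Context: Fix nonzero real polynomials $g_1,\dots,g_m$ in $n$ variables and nonnegative integers $d_1,\dots,d_m$. Let $\mathcal V$ be the real vector space of polynomials of the form $\sum_{i=1}^m g_i r_i$ with each $r_i$ a polynomial of degree at most $2d_i$, and let $\Sigma\subseteq\mathcal V$ be the cone of weighted sums of squares $\sum_{i=1}^m g_i\sigma_i$, where each $\sigma_i$ is a sum of squares of polynomials of degree at most $d_i$. Assume $\Sigma$ is a proper cone (closed, convex, pointed, full-dimensional in $\mathcal V$). Fix an ordered basis $\mathbf q=(q_1,\dots,q_U)$ of $\mathcal V$ and identify $\mathcal V$ and its dual with $\mathbb R^U$ (coefficient vectors), with the standard inner product and Euclidean norm $\|\cdot\|$; $\Sigma^*=\{\mathbf x:\mathbf x^T\mathbf s\ge 0\ \forall \mathbf s\in\Sigma\}$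 is the dual cone and $K^\circ$ denotes the interior of $K$. For each $i$ fix an ordered basis $\mathbf p_i=(p_{i,1},\dots,p_{i,L_i})$ of the polynomials of degree at most $d_i$, and let $\Lambda_i:\mathbb R^U\to\mathbb S^{L_i}$ be the unique linear map with $\sum_{u=1}^U q_u\Lambda_i(\mathbf e_u)=g_i\mathbf p_i\mathbf p_i^T$ (as matrices of polynomials). Let $\Lambda=\Lambda_1\oplus\cdots\oplus\Lambda_m$, mapping $\mathbb R^U$ into block-diagonal symmetric matrices, and $\Lambda^*$ its adjoint with respect to the trace inner product. Then $\Sigma^*=\{\mathbf x:\Lambda(\mathbf x)\succeq 0\}$ and $(\Sigma^* )^\circ=\{\mathbf x:\Lambda(\mathbf x)\succ0\}$. Let $f(\mathbf x)=-\ln\det\Lambda(\mathbf x)$ on $(\Sigma^* )^\circ$; its Hessian $H(\mathbf x)$ is the positive definite operator $H(\mathbf x)\mathbf w=\Lambda^*(\Lambda(\mathbf x)^{-1}\Lambda(\mathbf w)\Lambda(\mathbf x)^{-1})$. A vector $\mathbf x\in(\Sigma^* )^\circ$ is called a dual certificate of $\mathbf s\in\Sigma$ if $H(\mathbf x)^{-1}\mathbf s\in\Sigma^*$. *)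

(* Defs.v *)
From HB Require Import structures.
From mathcomp Require Import all_boot all_order all_algebra.
From mathcomp Require Import mpoly.
Set Implicit Arguments. Unset Strict Implicit. Unset Printing Implicit Defensive.
Import Order.TTheory GRing.Theory Num.Theory.
Local Open Scope ring_scope.

Section Defs.
Variable R : realFieldType.

(* total degree of p is at most k (the zero polynomial has every degree bound) *)
Definition deg_le (n : nat) (p : {mpoly R[n]}) (k : nat) : Prop := (msize p <= k.+1)%N.

Definition inV (n m : nat) (g : 'I_m -> {mpoly R[n]}) (d : 'I_m -> nat)
  (f : {mpoly R[n]}) : Prop :=
  exists r : 'I_m -> {mpoly R[n]},
    (forall i, deg_le (r i) (2 * d i)) /\ f = \sum_(i < m) g i * r i.

Definition lincomb (n N : nat) (q : 'I_N -> {mpoly R[n]}) (c : 'cV[R]_N) : {mpoly R[n]} :=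
  \sum_(u < N) c u 0 *: q u.

Definition is_basis_of (n N : nat) (P : {mpoly R[n]} -> Prop)
  (q : 'I_N -> {mpoly R[n]}) : Prop :=
  [/\ forall u, P (q u),
      forall c : 'cV[R]_N, lincomb q c = 0 -> c = 0
    & forall f, P f -> exists c : 'cV[R]_N, f = lincomb q c].

Definition is_sos (n : nat) (k : nat) (sigma : {mpoly R[n]}) : Prop :=
  exists s : seq {mpoly R[n]},
    (forall r, r \in s -> deg_le r k) /\ sigma = \sum_(r <- s) r ^+ 2.

Definition is_wsos (n m : nat) (g : 'I_m -> {mpoly R[n]}) (d : 'I_m -> nat)
  (f : {mpoly R[n]}) : Prop :=
  exists sigma : 'I_m -> {mpoly R[n]},
    (forall i, is_sos (d i) (sigma i)) /\ f = \sum_(i < m) g i * sigma i.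

(* Sigma, as a set of coefficient vectors w.r.t. the basis q *)
Definition Sigma (n m U : nat) (g : 'I_m -> {mpoly R[n]}) (d : 'I_m -> nat)
  (q : 'I_U -> {mpoly R[n]}) (s : 'cV[R]_U) : Prop :=
  is_wsos g d (lincomb q s).

Definition dotv (U : nat) (x y : 'cV[R]_U) : R := \sum_(u < U) x u 0 * y u 0.
Definition sqnorm (U : nat) (x : 'cV[R]_U) : R := dotv x x.

Definition dual_cone (U : nat) (K : 'cV[R]_U -> Prop) (x : 'cV[R]_U) : Prop :=
  forall s, K s -> 0 <= dotv x s.

Definition interior_of (U : nat) (K : 'cV[R]_U -> Prop) (x : 'cV[R]_U) : Prop :=
  exists2 e : R, 0 < e & forall y, sqnorm (y - x) < e ^+ 2 -> K y.

Definition closed_set (U : nat) (K : 'cV[R]_U -> Prop) : Prop :=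
  forall x, ~ K x -> interior_of (fun y => ~ K y) x.

Definition convex_set (U : nat) (K : 'cV[R]_U -> Prop) : Prop :=
  forall x y (t : R), K x -> K y -> 0 <= t -> t <= 1 -> K (t *: x + (1 - t) *: y).

Definition is_cone (U : nat) (K : 'cV[R]_U -> Prop) : Prop :=
  forall x (t : R), K x -> 0 <= t -> K (t *: x).

Definition pointed (U : nat) (K : 'cV[R]_U -> Prop) : Prop :=
  forall x, K x -> K (- x) -> x = 0.

Definition full_dim (U : nat) (K : 'cV[R]_U -> Prop) : Prop :=
  exists x, interior_of K x.

Definition proper_cone (U : nat) (K : 'cV[R]_U -> Prop) : Prop :=
  [/\ is_cone K, closed_set K, convex_set K, pointed K & full_dim K].

Definition psd (N : nat) (A : 'M[R]_N) : Prop :=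
  A^T = A /\ forall v : 'cV[R]_N, 0 <= (v^T *m A *m v) 0 0.
Definition pd (N : nat) (A : 'M[R]_N) : Prop :=
  A^T = A /\ forall v : 'cV[R]_N, v != 0 -> 0 < (v^T *m A *m v) 0 0.

Definition trdot (N : nat) (A B : 'M[R]_N) : R := \tr (A^T *m B).

Definition evec (U : nat) (u : 'I_U) : 'cV[R]_U := \col_(v < U) (v == u)%:R.

Definition Lam_i (m U : nat) (L : 'I_m -> nat) (A : forall i, 'I_U -> 'M[R]_(L i))
  (i : 'I_m) (x : 'cV[R]_U) : 'M[R]_(L i) :=
  \sum_(u < U) x u 0 *: A i u.

Definition Lam (m U : nat) (L : 'I_m -> nat) (A : forall i, 'I_U -> 'M[R]_(L i))
  (x : 'cV[R]_U) : 'M[R]_(\sum_i L i) :=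
  mxdiag (fun i => Lam_i A i x).

Definition Lam_adj (m U : nat) (L : 'I_m -> nat) (A : forall i, 'I_U -> 'M[R]_(L i))
  (S : 'M[R]_(\sum_i L i)) : 'cV[R]_U :=
  \col_(u < U) trdot (Lam A (evec u)) S.

Definition Hess_op (m U : nat) (L : 'I_m -> nat) (A : forall i, 'I_U -> 'M[R]_(L i))
  (x w : 'cV[R]_U) : 'cV[R]_U :=
  Lam_adj A (invmx (Lam A x) *m Lam A w *m invmx (Lam A x)).

Definition Hess (m U : nat) (L : 'I_m -> nat) (A : forall i, 'I_U -> 'M[R]_(L i))
  (x : 'cV[R]_U) : 'M[R]_U :=
  \matrix_(u < U, v < U) Hess_op A x (evec v) u 0.

Definition Hinv_app (m U : nat) (L : 'I_m -> nat) (A : forall i, 'I_U -> 'M[R]_(L i))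
  (x s : 'cV[R]_U) : 'cV[R]_U :=
  invmx (Hess A x) *m s.

Definition Smat (m U : nat) (L : 'I_m -> nat) (A : forall i, 'I_U -> 'M[R]_(L i))
  (x s : 'cV[R]_U) : 'M[R]_(\sum_i L i) :=
  invmx (Lam A x) *m Lam A (Hinv_app A x s) *m invmx (Lam A x).

Definition dual_certificate (n m U : nat) (g : 'I_m -> {mpoly R[n]}) (d : 'I_m -> nat)
  (q : 'I_U -> {mpoly R[n]}) (L : 'I_m -> nat) (A : forall i, 'I_U -> 'M[R]_(L i))
  (x s : 'cV[R]_U) : Prop :=
  dual_cone (Sigma g d q) (Hinv_app A x s).

End Defs.

(* Main.v *)
Require Import Defs.
From HB Require Import structures.
From mathcomp Require Import all_boot all_order all_algebra.
From mathcomp Require Import mpoly.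
From mathcomp Require Import ring lra.
Import Order.TTheory GRing.Theory Num.Theory.
Local Open Scope ring_scope.
Set Implicit Arguments. Unset Strict Implicit.

Section Gen.
Variable R : realFieldType.

Definition bf N (M : 'M[R]_N) (u v : 'cV[R]_N) : R := (u^T *m M *m v) 0 0.

Lemma bfDl N (M : 'M[R]_N) u1 u2 v : bf M (u1 + u2) v = bf M u1 v + bf M u2 v.
Proof. by rewrite /bf linearD /= !mulmxDl mxE. Qed.
Lemma bfZl N (M : 'M[R]_N) c u v : bf M (c *: u) v = c * bf M u v.
Proof. by rewrite /bf linearZ /= -!scalemxAl mxE. Qed.
Lemma bfDr N (M : 'M[R]_N) u v1 v2 : bf M u (v1 + v2) = bf M u v1 + bf M u v2.
Proof. by rewrite /bf !mulmxDr mxE. Qed.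
Lemma bfZr N (M : 'M[R]_N) c u v : bf M u (c *: v) = c * bf M u v.
Proof. by rewrite /bf -!scalemxAr mxE. Qed.
Lemma bf_tr N (M : 'M[R]_N) u v : bf M u v = bf M^T v u.
Proof.
have -> : bf M u v = ((u^T *m M *m v)^T) 0 0 by rewrite mxE.
by rewrite !trmx_mul trmxK mulmxA.
Qed.
Lemma bfMD N (M1 M2 : 'M[R]_N) u v : bf (M1 + M2) u v = bf M1 u v + bf M2 u v.
Proof. by rewrite /bf mulmxDr mulmxDl mxE. Qed.
Lemma bfMZ N (M : 'M[R]_N) c u v : bf (c *: M) u v = c * bf M u v.
Proof. by rewrite /bf -scalemxAr -scalemxAl mxE. Qed.
Lemma bfM0 N (u v : 'cV[R]_N) : bf 0 u v = 0.
Proof. by rewrite /bf mulmx0 mul0mx mxE. Qed.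
Lemma bfM_sum N (I : Type) (r : seq I) (P : pred I) (F : I -> 'M[R]_N) u v :
  bf (\sum_(i <- r | P i) F i) u v = \sum_(i <- r | P i) bf (F i) u v.
Proof.
by apply: (big_morph (fun M => bf M u v)) => [M1 M2|]; rewrite ?bfMD ?bfM0.
Qed.
Lemma bf0l N (M : 'M[R]_N) v : bf M 0 v = 0.
Proof. by rewrite -(scale0r 0) bfZl mul0r. Qed.
Lemma bf0r N (M : 'M[R]_N) v : bf M v 0 = 0.
Proof. by rewrite -(scale0r 0) bfZr mul0r. Qed.
Lemma bf_delta N (M : 'M[R]_N) a b : bf M (delta_mx a 0) (delta_mx b 0) = M a b.
Proof. by rewrite /bf trmx_delta -rowE -colE !mxE. Qed.

Lemma bf_expand N (M : 'M[R]_N) u w t :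
  bf M (u + t *: w) (u + t *: w) =
  bf M u u + t * bf M u w + t * bf M w u + t ^+ 2 * bf M w w.
Proof. rewrite !bfDl !bfDr !bfZl !bfZr; ring. Qed.

Definition psdm N (P : 'M[R]_N) := P^T = P /\ forall v, 0 <= bf P v v.

Lemma psd_diag0 N (P : 'M[R]_N) j : psdm P -> P j j = 0 -> forall k, P j k = 0.
Proof.
move=> [sym pos] Pjj k; apply/eqP; apply/negPn/negP => ne.
set c := P j k.
have Pkj : P k j = c by rewrite -sym mxE.
pose t := - (P k k + 1) / (2 * c).
have := pos (delta_mx k 0 + t *: delta_mx j 0).
rewrite bf_expand !bf_delta Pjj Pkj.
have -> : P k k + t * c + t * c + t ^+ 2 * 0 = -1.
  rewrite /t; field; exact: ne.
move=> h; have := le_lt_trans h (ltrN10 R); by rewrite ltxx.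
Qed.

Lemma bfMN N (M : 'M[R]_N) u v : bf (- M) u v = - bf M u v.
Proof. by rewrite -scaleN1r bfMZ mulN1r. Qed.
Lemma bfMB N (M1 M2 : 'M[R]_N) u v : bf (M1 - M2) u v = bf M1 u v - bf M2 u v.
Proof. by rewrite bfMD bfMN. Qed.

Lemma bf_outer N (a b : 'cV[R]_N) u v :
  bf (a *m b^T) u v = (u^T *m a) 0 0 * (b^T *m v) 0 0.
Proof.
by rewrite /bf mulmxA -(mulmxA _ b^T) mxE big_ord1.
Qed.

Lemma psd_zero N (P : 'M[R]_N) : psdm P -> (forall j, P j j = 0) -> P = 0.
Proof. by move=> h z; apply/matrixP => j k; rewrite mxE; apply: psd_diag0. Qed.

Lemma psd_decomp N (P : 'M[R]_N) : psdm P ->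
  exists s : seq (R * 'cV[R]_N), (forall x, x \in s -> 0 <= x.1) /\
     P = \sum_(x <- s) x.1 *: (x.2 *m x.2^T).
Proof.
move: {2}#|[pred j | P j j != 0]| (leqnn #|[pred j | P j j != 0]|) => k.
elim: k P => [|k IH] P hk hP.
  exists [::]; rewrite big_nil; split=> //; apply: psd_zero => // j.
  apply/eqP; apply/negPn/negP => ne.
  by move: hk; rewrite leqn0 => /eqP/card0_eq/(_ j); rewrite inE ne.
case: (pickP [pred j | P j j != 0]) => [j /= Pj | none]; last first.
  exists [::]; rewrite big_nil; split=> //; apply: psd_zero => // j.
  by apply/eqP; move: (none j) => /= /negbFE.
have dpos : 0 < P j j.
  by rewrite lt_def Pj /= -bf_delta; apply: hP.2.
set e : 'cV[R]_N := delta_mx j 0.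
set b := P *m e.
set P' := P - (P j j)^-1 *: (b *m b^T).
have bk : forall l, b l 0 = P l j by move=> l; rewrite /b /e -colE mxE.
have hP' : psdm P'.
  split.
    by rewrite /P' linearB /= linearZ /= trmx_mul trmxK hP.1.
  move=> v; pose s := bf P e v; pose t := - (s / P j j).
  have -> : bf P' v v = bf P (v + t *: e) (v + t *: e).
    rewrite bf_expand /P' bfMB bfMZ bf_outer /b bf_delta.
    have h1 : (v^T *m (P *m e)) 0 0 = s.
      by rewrite mulmxA -/(bf P v _) bf_tr hP.1.
    have h2 : ((P *m e)^T *m v) 0 0 = s.
      by rewrite trmx_mul hP.1 -/(bf P _ v).
    rewrite h1 h2 (bf_tr P v e) hP.1 -/s /t.
    have hd : P j j != 0 by rewrite gt_eqF.
    move: (P j j) hd => D hd; field; exact: hd.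
  exact: hP.2.
have P'kk : forall l, P' l l = P l l - (P j j)^-1 * (P l j * P l j).
  have bk2 : forall l, (\sum_j0 P l j0 * e j0 0) = P l j by move=> l; rewrite -bk mxE.
  by move=> l; rewrite /P' !mxE big_ord1 !mxE !bk2.
have sub : [pred l | P' l l != 0] \subset [predD1 [pred l | P l l != 0] & j].
  apply/subsetP => l; rewrite !inE P'kk; apply: contraR.
  case/nandP => [/negPn/eqP -> | /negPn/eqP Pll].
    by rewrite mulrA mulVf ?mul1r ?subrr // gt_eqF.
  by rewrite Pll (psd_diag0 hP Pll) mulr0 mulr0 subrr.
have [s [s0 Es]] : exists s : seq (R * 'cV[R]_N), (forall x, x \in s -> 0 <= x.1) /\
     P' = \sum_(x <- s) x.1 *: (x.2 *m x.2^T).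
  apply: IH => //.
  apply: leq_trans (subset_leq_card sub) _.
  move: hk; rewrite (cardD1 j [pred l | P l l != 0]) inE Pj add1n ltnS; exact.
exists (((P j j)^-1, b) :: s); split.
  move=> x; rewrite inE => /orP [/eqP -> /= | /s0 //].
  by rewrite invr_ge0 ltW.
by rewrite big_cons -Es /P' /= addrC subrK.
Qed.


Lemma psum_seq0 (I : eqType) (s : seq I) (F : I -> R) :
  (forall x, x \in s -> 0 <= F x) -> \sum_(x <- s) F x = 0 ->
  forall x, x \in s -> F x = 0.
Proof.
elim: s => [|y s IH] h; first by [].
have hs : forall z, z \in s -> 0 <= F z by move=> z zs; apply: h; rewrite inE zs orbT.
rewrite big_cons => /eqP; rewrite paddr_eq0; first last.
- by rewrite big_seq; apply: sumr_ge0 => z zs; apply: hs.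
- exact: h (mem_head _ _).
case/andP => /eqP hy /eqP hsum x; rewrite inE => /orP [/eqP -> //|xs].
exact: IH.
Qed.

Lemma trace_zero N (P B : 'M[R]_N) : psdm P ->
  (forall v, v != 0 -> 0 < bf P v v) -> P \in unitmx -> B^T = B ->
  \tr (B *m P *m B *m P) = 0 -> B = 0.
Proof.
move=> hP pdP uP sB.
have [s [s0 Es]] := psd_decomp hP.
have term : forall x : R * 'cV[R]_N,
    \tr (B *m P *m B *m (x.1 *: (x.2 *m x.2^T))) = x.1 * bf P (B *m x.2) (B *m x.2).
  move=> x; rewrite -scalemxAr mxtraceZ mulmxA mxtrace_mulC.
  rewrite /mxtrace big_ord1 /bf trmx_mul sB !mulmxA.
  done.
rewrite {2}Es mulmx_sumr raddf_sum /=.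
under eq_bigr do rewrite term.
move=> hsum.
have hz := psum_seq0 (fun x xs => mulr_ge0 (s0 x xs) (hP.2 _)) hsum.
have BP : B *m P = 0.
  rewrite Es mulmx_sumr big_seq big1 // => x xs.
  have := hz x xs; move/eqP; rewrite mulf_eq0 => /orP [/eqP -> | hb].
    by rewrite scale0r mulmx0.
  have Bx : B *m x.2 = 0.
    apply/eqP; apply/negPn/negP => nz.
    by move: (pdP _ nz); rewrite (eqP hb) ltxx.
  by rewrite -scalemxAr mulmxA Bx mul0mx scaler0.
by rewrite -(mulmxK uP B) BP mul0mx.
Qed.

Lemma inj_unit N (M : 'M[R]_N) : (forall w : 'cV[R]_N, M *m w = 0 -> w = 0) -> M \in unitmx.
Proof.
move=> h; rewrite unitmxE unitfE -det_tr; apply/negP => /det0P [v nz hv].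
move/negP: nz; apply; apply/eqP.
rewrite -[v]trmxK (h v^T) ?trmx0 //.
by rewrite -[M]trmxK -trmx_mul hv trmx0.
Qed.

Lemma bf_mxdiag m (L : 'I_m -> nat) (B : forall i, 'M[R]_(L i))
   (v : 'cV[R]_(\sum_i L i)) :
  bf (mxdiag B) v v = \sum_i bf (B i) (submxcol v i) (submxcol v i).
Proof.
have -> : bf (mxdiag B) v v =
   bf (mxdiag B) (mxcol (fun i => submxcol v i)) (mxcol (fun i => submxcol v i)).
  by rewrite submxcolK.
rewrite /bf tr_mxcol -mulmxA mul_mxdiag_mxcol mul_mxrow_mxcol summxE.
by apply: eq_bigr => i _; rewrite mulmxA.
Qed.

Lemma bf_mxdiag_single m (L : 'I_m -> nat) (B : forall i, 'M[R]_(L i))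
   i (c : 'cV[R]_(L i)) :
  let v := mxcol (fun j => if j == i then conform_mx 0 c else 0) in
  bf (mxdiag B) v v = bf (B i) c c.
Proof.
rewrite /= bf_mxdiag (bigD1 i) //= big1 => [|j ne]; rewrite mxcolK.
  by rewrite eqxx conform_mx_id addr0.
by rewrite (negbTE ne) bf0l.
Qed.

End Gen.

Set Implicit Arguments. Unset Strict Implicit.

Section Lin.
Variables (R : realFieldType) (n N : nat) (q : 'I_N -> {mpoly R[n]}).

Lemma lincombD c1 c2 : lincomb q (c1 + c2) = lincomb q c1 + lincomb q c2.
Proof. by rewrite /lincomb -big_split; apply: eq_bigr => u _; rewrite mxE scalerDl. Qed.
Lemma lincombZ a c : lincomb q (a *: c) = a *: lincomb q c.
Proof. by rewrite /lincomb scaler_sumr; apply: eq_bigr => u _; rewrite mxE scalerA. Qed.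
Lemma lincomb0 : lincomb q 0 = 0.
Proof. by rewrite /lincomb big1 // => u _; rewrite mxE scale0r. Qed.
Lemma lincombN c : lincomb q (- c) = - lincomb q c.
Proof. by rewrite -scaleN1r lincombZ scaleN1r. Qed.
Lemma lincomb_sum (I : Type) (r : seq I) (P : pred I) (F : I -> 'cV[R]_N) :
  lincomb q (\sum_(i <- r | P i) F i) = \sum_(i <- r | P i) lincomb q (F i).
Proof. exact: (big_morph _ lincombD lincomb0). Qed.

Lemma dotvDr (x y z : 'cV[R]_N) : dotv x (y + z) = dotv x y + dotv x z.
Proof. by rewrite /dotv -big_split; apply: eq_bigr => u _; rewrite mxE mulrDr. Qed.
Lemma dotvZr (x y : 'cV[R]_N) a : dotv x (a *: y) = a * dotv x y.
Proof. by rewrite /dotv mulr_sumr; apply: eq_bigr => u _; rewrite mxE mulrCA. Qed.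
Lemma dotvC (x y : 'cV[R]_N) : dotv x y = dotv y x.
Proof. by rewrite /dotv; apply: eq_bigr => u _; rewrite mulrC. Qed.
Lemma dotvDl (x y z : 'cV[R]_N) : dotv (y + z) x = dotv y x + dotv z x.
Proof. by rewrite dotvC dotvDr !(dotvC x). Qed.
Lemma dotvZl (x y : 'cV[R]_N) a : dotv (a *: y) x = a * dotv y x.
Proof. by rewrite dotvC dotvZr dotvC. Qed.
Lemma dotv0r (x : 'cV[R]_N) : dotv x 0 = 0.
Proof. by rewrite -(scale0r 0) dotvZr mul0r. Qed.
Lemma dotv_sumr (x : 'cV[R]_N) (I : Type) (r : seq I) (P : pred I) F :
  dotv x (\sum_(i <- r | P i) F i) = \sum_(i <- r | P i) dotv x (F i).
Proof. exact: (big_morph _ (dotvDr x) (dotv0r x)). Qed.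
Lemma sqnorm_ge0 (x : 'cV[R]_N) : 0 <= sqnorm x.
Proof. by rewrite /sqnorm /dotv sumr_ge0 // => u _; rewrite -expr2 sqr_ge0. Qed.
Lemma sqnorm0 (x : 'cV[R]_N) : sqnorm x = 0 -> x = 0.
Proof.
move=> /eqP; rewrite /sqnorm /dotv psumr_eq0 => [/allP h|u _]; last first.
  by rewrite -expr2 sqr_ge0.
apply/matrixP => u j; rewrite ord1 mxE.
by have /implyP/(_ isT) := h u (mem_index_enum _); rewrite mulf_eq0 orbb => /eqP.
Qed.
Lemma sqnormZ (x : 'cV[R]_N) a : sqnorm (a *: x) = a ^+ 2 * sqnorm x.
Proof. by rewrite /sqnorm dotvZl dotvZr mulrA expr2. Qed.

End Lin.

Lemma small_eps (R : realFieldType) (e T : R) : 0 < e -> 0 <= T ->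
  exists2 eps, 0 < eps & eps ^+ 2 * T < e ^+ 2.
Proof.
move=> e0 T0; exists (e / (T + 1)).
  by rewrite divr_gt0 // ltr_wpDl.
have T1 : 0 < T + 1 by rewrite ltr_wpDl.
rewrite expr_div_n mulrAC ltr_pdivrMr ?exprn_gt0 //.
rewrite ltr_pM2l ?exprn_gt0 //; nra.
Qed.

Unset Implicit Arguments.
Unset Strict Implicit.


Lemma bf_sum (R : realFieldType) N (M : 'M[R]_N) u v :
  bf M u v = \sum_a \sum_b u a 0 * M a b * v b 0.
Proof.
rewrite /bf mxE; under eq_bigr do rewrite mxE big_distrl /=.
rewrite exchange_big /=; apply: eq_bigr => a _; apply: eq_bigr => b _.
by rewrite !mxE.
Qed.

Lemma conform_mxZ (R : realFieldType) m1 n1 m2 n2 c (M : 'M[R]_(m1, n1)) :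
  conform_mx (0 : 'M[R]_(m2, n2)) (c *: M) = c *: conform_mx 0 M.
Proof.
case: (eqVneq m1 m2) => [e1|ne]; last by rewrite !nonconform_mx ?ne ?scaler0.
case: (eqVneq n1 n2) => [e2|ne]; last by rewrite !nonconform_mx ?ne ?orbT ?scaler0.
by subst; rewrite !conform_mx_id.
Qed.

Lemma mxdiag_scale (R : realFieldType) m (L : 'I_m -> nat) c (B : forall i, 'M[R]_(L i)) :
  mxdiag (fun i => c *: B i) = c *: mxdiag B.
Proof.
rewrite /mxdiag /mxblock; apply/matrixP => s t; rewrite !mxE.
by case: (_ == _); rewrite ?conform_mxZ !mxE ?mulr0.
Qed.

Lemma psd_congr (R : realFieldType) N (P B : 'M[R]_N) :
  P^T = P -> P \in unitmx -> psd B <-> psd (P *m B *m P).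
Proof.
move=> sP uP; split.
  move=> [sB hB]; split.
    by rewrite !trmx_mul sP sB mulmxA.
  move=> v; have := hB (P *m v).
  by rewrite trmx_mul sP !mulmxA.
move=> [s1 h1]; split.
  move: s1; rewrite !trmx_mul sP mulmxA => e.
  have := congr1 (fun M => invmx P *m M *m invmx P) e.
  by rewrite /= !mulmxA !(mulVmx uP) !mul1mx -!mulmxA !(mulmxV uP) !mulmx1.
move=> v; have := h1 (invmx P *m v).
rewrite trmx_mul trmx_inv sP !mulmxA (mulmxKV uP) -(mulmxA _ P) (mulmxV uP) mulmx1.
done.
Qed.

Lemma Lam_adj_sum (R : realFieldType) m U (L : 'I_m -> nat) (A : forall i, 'I_U -> 'M[R]_(L i))
  (I : finType) (c : I -> R) (S : I -> 'M[R]_(\sum_i L i)) :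
  Lam_adj A (\sum_k c k *: S k) = \sum_k c k *: Lam_adj A (S k).
Proof.
apply/matrixP => u j; rewrite mxE summxE /trdot mulmx_sumr raddf_sum.
by apply: eq_bigr => k _; rewrite !mxE -scalemxAr; apply: mxtraceZ.
Qed.

Section Main.
Variables (R : realFieldType) (n m : nat)
  (g : 'I_m -> {mpoly R[n]}) (hg : forall i, g i != 0) (d : 'I_m -> nat)
  (U : nat) (q : 'I_U -> {mpoly R[n]}) (hq : is_basis_of (inV g d) q)
  (hSigma : proper_cone (Sigma g d q))
  (L : 'I_m -> nat) (p : forall i, 'I_(L i) -> {mpoly R[n]})
  (hp : forall i, is_basis_of (fun r => deg_le r (d i)) (p i))
  (A : forall i, 'I_U -> 'M[R]_(L i))
  (hA : forall i (j k : 'I_(L i)),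
          \sum_(u < U) (A i u) j k *: q u = g i * (p i j * p i k)).

Lemma lincomb_inj {c1 c2} : lincomb q c1 = lincomb q c2 -> c1 = c2.
Proof.
case: hq => _ hi _ h; apply/eqP; rewrite -subr_eq0; apply/eqP; apply: hi.
by rewrite lincombD lincombN h subrr.
Qed.

Definition tvec i (c : 'cV[R]_(L i)) : 'cV[R]_U := \col_u bf (A i u) c c.

Lemma tvecE i c : lincomb q (tvec i c) = g i * lincomb (p i) c ^+ 2.
Proof.
rewrite /lincomb; under eq_bigr do rewrite mxE bf_sum scaler_suml.
under eq_bigr do under eq_bigr do rewrite scaler_suml.
rewrite exchange_big /=; under eq_bigr do rewrite exchange_big /=.
rewrite expr2 big_distrl /= mulr_sumr; apply: eq_bigr => a _.
rewrite big_distrr /= mulr_sumr; apply: eq_bigr => b _.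
rewrite (eq_bigr (fun u => (c a 0 * c b 0) *: ((A i u) a b *: q u))) => [|u _]; last first.
  by rewrite scalerA; congr (_ *: _); rewrite mulrAC.
by rewrite -scaler_sumr hA -scalerAl -scalerAr -!scalerAr scalerA.
Qed.


Lemma dot_tvec w i c : dotv w (tvec i c) = bf (Lam_i A i w) c c.
Proof.
by rewrite /dotv /Lam_i bfM_sum; apply: eq_bigr => u _; rewrite mxE bfMZ.
Qed.

Lemma deg_polyc i c : deg_le (lincomb (p i) c) (d i).
Proof.
rewrite /deg_le /lincomb; apply: leq_trans (msize_sum _ _ _) _.
apply/bigmax_leqP => j _; apply: leq_trans (msizeZ_le _ _) _.
by case: (hp i) => h _ _; apply: h.
Qed.

Lemma Sigma_tsum (c : forall i, 'cV[R]_(L i)) :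
  Sigma g d q (\sum_i tvec i (c i)).
Proof.
rewrite /Sigma /is_wsos lincomb_sum.
exists (fun i => lincomb (p i) (c i) ^+ 2); split.
  move=> i; exists [:: lincomb (p i) (c i)]; split; last by rewrite big_seq1.
  by move=> r; rewrite inE => /eqP ->; apply: deg_polyc.
by apply: eq_bigr => i _; rewrite tvecE.
Qed.

Lemma Sigma_tvec i c : Sigma g d q (tvec i c).
Proof.
rewrite /Sigma /is_wsos tvecE.
exists (fun j => if j == i then lincomb (p i) c ^+ 2 else 0); split.
  move=> j; case: eqP => [->|_].
    exists [:: lincomb (p i) c]; split; last by rewrite big_seq1.
    by move=> r; rewrite inE => /eqP ->; apply: deg_polyc.
  by exists [::]; rewrite big_nil.
rewrite (bigD1 i) //= eqxx big1 ?addr0 // => j /negbTE ->; by rewrite mulr0.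
Qed.

Lemma A_sym i u : (A i u)^T = A i u.
Proof.
have e : forall j k, lincomb q (\col_v A i v j k) = g i * (p i j * p i k).
  by move=> j k; rewrite -hA /lincomb; apply: eq_bigr => v _; rewrite mxE.
apply/matrixP => j k; rewrite mxE.
have h : lincomb q (\col_v A i v k j) = lincomb q (\col_v A i v j k).
  by rewrite !e [p i k * _]mulrC.
have := lincomb_inj h.
by move/(congr1 (fun c : 'cV[R]_U => c u 0)); rewrite !mxE.
Qed.

Lemma Lam_i_sym i w : (Lam_i A i w)^T = Lam_i A i w.
Proof.
rewrite /Lam_i raddf_sum /=; apply: eq_bigr => u _.
by rewrite linearZ /= A_sym.
Qed.

Lemma Lam_sym w : (Lam A w)^T = Lam A w.
Proof. by rewrite /Lam tr_mxdiag; apply: eq_mxdiag => i; apply: Lam_i_sym. Qed.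

Lemma Lam_iN i w : Lam_i A i (- w) = - Lam_i A i w.
Proof.
rewrite /Lam_i -sumrN; apply: eq_bigr => u _; by rewrite mxE scaleNr.
Qed.

Lemma Lam_i_evec i u : Lam_i A i (evec R u) = A i u.
Proof.
rewrite /Lam_i (bigD1 u) //= big1 => [|v /negbTE ne]; first by rewrite mxE eqxx scale1r addr0.
by rewrite mxE ne scale0r.
Qed.

Lemma Lam_lin w : Lam A w = \sum_u w u 0 *: Lam A (evec R u).
Proof.
rewrite /Lam; under [RHS]eq_bigr do rewrite -mxdiag_scale.
rewrite -mxdiag_sum; apply: eq_mxdiag => i.
by rewrite /Lam_i; apply: eq_bigr => u _; rewrite -/(Lam_i A i (evec R u)) Lam_i_evec.
Qed.


Lemma Sigma_dot w s : Sigma g d q s ->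
  (forall i c, 0 <= bf (Lam_i A i w) c c) -> 0 <= dotv w s.
Proof.
move=> [sig [hsig Es]] hw.
have hi : forall i, exists t : 'cV[R]_U, lincomb q t = g i * sig i /\ 0 <= dotv w t.
  move=> i; case: (hsig i) => sq [hdeg ->]; elim: sq hdeg => [|r sq IH] hdeg.
    by exists 0; rewrite big_nil mulr0 lincomb0 dotv0r.
  case: (hp i) => _ _ hspan.
  have [c ->] := hspan r (hdeg r (mem_head _ _)).
  have [|t [Et Pt]] := IH.
    by move=> r' r'in; apply: hdeg; rewrite inE r'in orbT.
  exists (tvec i c + t); split.
    by rewrite lincombD tvecE Et big_cons mulrDr.
  by rewrite dotvDr addr_ge0 // dot_tvec.
have [tf htf] := fin_all_exists hi.
have -> : s = \sum_i tf i.
  apply: lincomb_inj; rewrite Es lincomb_sum; apply: eq_bigr => i _.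
  by rewrite (htf i).1.
by rewrite dotv_sumr sumr_ge0 // => i _; apply: (htf i).2.
Qed.

Lemma dual_psd w : dual_cone (Sigma g d q) w <-> psd (Lam A w).
Proof.
split.
  move=> h; split; first exact: Lam_sym.
  move=> v; rewrite -/(bf _ v v) /Lam bf_mxdiag sumr_ge0 // => i _.
  by rewrite -dot_tvec; apply: h; apply: Sigma_tvec.
move=> [_ hv] s hs; apply: Sigma_dot => // i c.
have := hv (mxcol (fun j => if j == i then conform_mx 0 c else 0)).
by rewrite -/(bf _ _ _) /Lam bf_mxdiag_single.
Qed.

Lemma dotvNl (x y : 'cV[R]_U) : dotv (- x) y = - dotv x y.
Proof. by rewrite -scaleN1r dotvZl mulN1r. Qed.

Lemma Lam_inj w : Lam A w = 0 -> w = 0.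
Proof.
move=> h0.
have Li : forall i, Lam_i A i w = 0.
  by apply/eq_mxdiagP; rewrite -/(Lam A w) h0 mxdiag0.
have D : forall s, Sigma g d q s -> dotv w s = 0.
  move=> s hs; apply/eqP; rewrite eq_le; apply/andP; split.
    rewrite -oppr_ge0 -dotvNl; apply: Sigma_dot => // i c.
    by rewrite Lam_iN Li oppr0 bfM0.
  by apply: Sigma_dot => // i c; rewrite Li bfM0.
case: hSigma => _ _ _ _ [t0 [e e0 he]].
have [eps eps0 heps] := small_eps e0 (sqnorm_ge0 w).
have hy : Sigma g d q (t0 + eps *: w).
  by apply: he; rewrite addrAC subrr add0r sqnormZ.
have := D _ hy; rewrite dotvDr D ?dotvZr; last first.
  by apply: he; rewrite subrr /sqnorm /dotv big1 ?exprn_gt0 // => u _; rewrite mxE mul0r.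
rewrite add0r => /eqP; rewrite mulf_eq0 (gt_eqF eps0) /= => /eqP.
exact: sqnorm0.
Qed.


Lemma pointed_arg (v : 'cV[R]_(\sum_i L i)) :
  \sum_i tvec i (submxcol v i) = 0 -> v = 0.
Proof.
move=> h0.
set c := fun i => submxcol v i.
have hz : \sum_i g i * lincomb (p i) (c i) ^+ 2 = 0.
  have := congr1 (lincomb q) h0; rewrite lincomb_sum lincomb0 => e; apply: etrans e.
  by apply: eq_bigr => i _; rewrite tvecE.
have ci : forall i, c i = 0.
  move=> i.
  have hneg : Sigma g d q (- tvec i (c i)).
    rewrite /Sigma /is_wsos lincombN tvecE.
    exists (fun j => if j == i then 0 else lincomb (p j) (c j) ^+ 2); split.
      move=> j; case: eqP => [_|_].
        by exists [::]; rewrite big_nil.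
      exists [:: lincomb (p j) (c j)]; split; last by rewrite big_seq1.
      by move=> r; rewrite inE => /eqP ->; apply: deg_polyc.
    move: hz; rewrite (bigD1 i) //= => /eqP; rewrite addr_eq0 => /eqP ->.
    rewrite opprK [RHS](bigD1 i) //= eqxx mulr0 add0r.
    by apply: eq_bigr => j /negbTE ->.
  case: hSigma => _ _ _ hpt _.
  have t0 := hpt _ (Sigma_tvec i (c i)) hneg.
  have : g i * lincomb (p i) (c i) ^+ 2 = 0 by rewrite -tvecE t0 lincomb0.
  move/eqP; rewrite mulf_eq0 (negbTE (hg i)) /= expf_eq0 /= => /eqP hl.
  by case: (hp i) => _ hi _; apply: hi.
rewrite -(submxcolK v) (@eq_mxcol _ _ _ _ _ (fun i => 0)) ?mxcol0 //.
Qed.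

Lemma Lam_pd x : interior_of (dual_cone (Sigma g d q)) x ->
  psd (Lam A x) /\ forall v, v != 0 -> 0 < bf (Lam A x) v v.
Proof.
move=> [e e0 he].
have hx : dual_cone (Sigma g d q) x.
  by apply: he; rewrite subrr /sqnorm /dotv big1 ?exprn_gt0 // => u _; rewrite mxE mul0r.
split; first by apply/dual_psd.
move=> v nz.
set t := \sum_i tvec i (submxcol v i).
have Et : bf (Lam A x) v v = dotv x t.
  by rewrite /Lam bf_mxdiag /t dotv_sumr; apply: eq_bigr => i _; rewrite dot_tvec.
have tnz : t != 0 by apply: contra nz => /eqP /pointed_arg ->.
have hT : 0 < sqnorm t.
  rewrite lt_def sqnorm_ge0 andbT; apply: contra tnz => /eqP /sqnorm0 ->; done.
have [eps eps0 heps] := small_eps e0 (sqnorm_ge0 t).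
have hy := he (x + (- eps) *: t).
have := hy _ t (Sigma_tsum _).
rewrite addrAC subrr add0r sqnormZ sqrrN => /(_ heps).
rewrite dotvDl dotvZl -/(sqnorm t) Et.
rewrite mulNr subr_ge0 => h.
apply: lt_le_trans h; exact: mulr_gt0.
Qed.


Variables (x : 'cV[R]_U) (hx : interior_of (dual_cone (Sigma g d q)) x).

Lemma LamU : Lam A x \in unitmx.
Proof.
apply: inj_unit => w hw; have [_ pdx] := Lam_pd _ hx.
apply/eqP; apply/negPn/negP => nz.
by have := pdx w nz; rewrite /bf -mulmxA hw mulmx0 mxE ltxx.
Qed.

Lemma P_sym : (invmx (Lam A x))^T = invmx (Lam A x).
Proof. by rewrite trmx_inv Lam_sym. Qed.

Lemma P_bf v : bf (invmx (Lam A x)) v v =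
  bf (Lam A x) (invmx (Lam A x) *m v) (invmx (Lam A x) *m v).
Proof.
rewrite /bf trmx_mul P_sym !mulmxA -(mulmxA _ _ (Lam A x)) (mulVmx LamU) mulmx1.
done.
Qed.

Lemma P_psd : psdm (invmx (Lam A x)).
Proof.
split; first exact: P_sym.
by move=> v; rewrite P_bf; have [[_ h] _] := Lam_pd _ hx; apply: h.
Qed.

Lemma P_pd v : v != 0 -> 0 < bf (invmx (Lam A x)) v v.
Proof.
move=> nz; rewrite P_bf; have [_ h] := Lam_pd _ hx; apply: h.
apply: contra nz => /eqP e.
by rewrite -(mulKVmx LamU v) e mulmx0.
Qed.

Lemma Hess_op_lin w : Hess_op A x w = \sum_v w v 0 *: Hess_op A x (evec R v).
Proof.
rewrite /Hess_op -Lam_adj_sum; congr (Lam_adj A _).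
rewrite {1}(Lam_lin w) mulmx_sumr mulmx_suml; apply: eq_bigr => v _.
by rewrite -scalemxAr -scalemxAl.
Qed.

Lemma Hess_mul w : Hess A x *m w = Hess_op A x w.
Proof.
apply/matrixP => u j; rewrite ord1 (Hess_op_lin w) [LHS]mxE summxE.
by apply: eq_bigr => v _; rewrite !mxE mulrC.
Qed.

Lemma dot_adj w S : dotv w (Lam_adj A S) = trdot (Lam A w) S.
Proof.
rewrite /dotv /trdot (Lam_lin w) raddf_sum mulmx_suml raddf_sum.
apply: eq_bigr => u _; rewrite mxE /trdot /=.
have -> : ((w u 0 *: Lam A (evec R u))^T = w u 0 *: (Lam A (evec R u))^T) by apply: linearZ.
by rewrite -scalemxAl; symmetry; apply: mxtraceZ.
Qed.

Lemma Hess_unit : Hess A x \in unitmx.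
Proof.
apply: inj_unit => w h; rewrite Hess_mul in h.
have : dotv w (Hess_op A x w) = 0 by rewrite h dotv0r.
rewrite /Hess_op dot_adj /trdot Lam_sym !mulmxA => htr.
apply: Lam_inj.
have uP : invmx (Lam A x) \in unitmx by rewrite unitmx_inv LamU.
exact: (trace_zero P_psd P_pd uP (Lam_sym w) htr).
Qed.

Lemma main_thm s :
  Lam_adj A (Smat A x s) = s /\
  (Sigma g d q s -> (dual_certificate g d q A x s <-> psd (Smat A x s))).
Proof.
split.
  by rewrite /Smat -/(Hess_op A x _) -Hess_mul /Hinv_app mulKVmx // Hess_unit.
move=> _; rewrite /dual_certificate /Smat dual_psd.
apply: psd_congr; first exact: P_sym.
by rewrite unitmx_inv LamU.
Qed.

End Main.



Theorem theorem1 (R : realFieldType) (n m : nat)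
  (g : 'I_m -> {mpoly R[n]}) (hg : forall i, g i != 0) (d : 'I_m -> nat)
  (U : nat) (q : 'I_U -> {mpoly R[n]}) (hq : is_basis_of (inV g d) q)
  (hSigma : proper_cone (Sigma g d q))
  (L : 'I_m -> nat) (p : forall i, 'I_(L i) -> {mpoly R[n]})
  (hp : forall i, is_basis_of (fun r => deg_le r (d i)) (p i))
  (A : forall i, 'I_U -> 'M[R]_(L i))
  (hA : forall i (j k : 'I_(L i)),
          \sum_(u < U) (A i u) j k *: q u = g i * (p i j * p i k))
  (x : 'cV[R]_U) (hx : interior_of (dual_cone (Sigma g d q)) x)
  (s : 'cV[R]_U) :
  Lam_adj A (Smat A x s) = s /\
  (Sigma g d q s -> (dual_certificate g d q A x s <-> psd (Smat A x s))).
Proof.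
exact: (@main_thm R n m g hg d U q hq hSigma L p hp A hA x hx s).
Qed.
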